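(* Let $G=(V,E)$ be a finite directed graph with $n=|V|$, positive edge capacities $c(e)$, and buffer size $B\ge 0$ at every vertex; let $G^{st}$ be its space-time graph and $R=\{r_i\}$ a sequence of requests $r_i=(a_i,b_i,t_i)$ over $G^{st}$. Let $c_{\min}=\min_{e\in E}c(e)$, $\alpha=\frac{c_{\min}}{2(\sum_{e\in E}c(e)+n\cdot B)}$, $\nu=1/\alpha$, and let $p_{\max}\ge(\nu+2)\cdot\mathrm{diam}(G)$. Then $$|\mathrm{OPT}_f(R\mid p_{\max})|\ge\frac12\left(1-\frac1e\right)|\mathrm{OPT}_f(R)|.$$
   Context: The space-time graph $G^{st}$ of $G$ has vertex set $V\times\mathbb{N}$ and edges $(u,t)\to(v,t+1)$ for every $(u,v)\in E$ and $t\in\mathbb{N}$, with capacity $c(u,v)$, and $(u,t)\to(u,t+1)$ for every $u\in V$, $t\in\mathbb{N}$, with capacity $B$. A request $r_i=(a_i,b_i,t_i)$ asks for a path in $G^{st}$ from $(a_i,t_i)$ to some vertex $(b_i,t)$ with $t\ge t_i$. A fractional path packing assigns nonnegative flow amounts to such paths, with total at most $1$ per request and total flow through each edge of $G^{st}$ at most its capacity; its throughput is the total assigned flow. $|\mathrm{OPT}_f(R)|$ is the maximum throughput of a fractional path packing for $R$, and $|\mathrm{OPT}_f(R\mid p_{\max})|$ is the maximum throughput of a fractional path packing for $R$ using only paths with at most $p_{\max}$ edges. $\mathrm{dist}_G(u,v)$ is the length of a shortest directed path from $u$ to $v$ in $G$, and $\mathrm{diam}(G)=\max\{\mathrm{dist}_G(u,v):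 \text{there is a path from } u \text{ to } v\}$. *)

(* Defs.v *)
From HB Require Import structures.
From mathcomp Require Import all_boot all_order all_algebra.
From mathcomp Require Import boolp classical_sets reals.
From mathcomp.analysis Require Import sequences exp.
Set Implicit Arguments. Unset Strict Implicit. Unset Printing Implicit Defensive.
Import Order.TTheory GRing.Theory Num.Theory.
Local Open Scope ring_scope.
Local Open Scope classical_set_scope.

Fixpoint kstep (V : finType) (E : rel V) (k : nat) (u v : V) : bool :=
  match k with
  | 0 => u == v
  | k'.+1 => [exists w, E u w && kstep E k' w v]
  end.

(* dist_G(u,v): length of a shortest directed path (0 if v is unreachable) *)
Definition dist (V : finType) (E : rel V) (u v : V) : nat :=
  match pselect (exists k, kstep E k u v) with
  | left H => ex_minn H
  | right _ => 0%N
  end.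

Definition diam (V : finType) (E : rel V) : nat :=
  \max_(p : V * V | `[< exists k, kstep E k p.1 p.2 >]) dist E p.1 p.2.

(* A path in G^st starting at (u,t) is encoded by its sequence of moves:
   [None] = buffer edge (w,s)->(w,s+1);  [Some v] = graph edge (w,s)->(v,s+1).
   An edge of G^st is encoded as (w, s, m): tail vertex w, tail time s, move m. *)
Definition stedge (V : finType) := (V * nat * option V)%type.

Fixpoint st_edges (V : finType) (u : V) (t : nat) (ms : seq (option V))
  : seq (stedge V) :=
  match ms with
  | [::] => [::]
  | m :: ms' => (u, t, m) :: st_edges (odflt u m) t.+1 ms'
  end.

Fixpoint st_end (V : finType) (u : V) (ms : seq (option V)) : V :=
  match ms with
  | [::] => u
  | m :: ms' => st_end (odflt u m) ms'
  end.

Definition is_stedge (V : finType) (E : rel V) (e : stedge V) : bool :=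
  match e.2 with None => true | Some v => E e.1.1 v end.

Definition st_cap (R : realType) (V : finType) (c : V -> V -> R) (B : R)
  (e : stedge V) : R :=
  match e.2 with None => B | Some v => c e.1.1 v end.

(* a request r = (a, b, t) *)
Definition request (V : finType) := (V * V * nat)%type.

(* ms encodes a path of G^st from (a,t) to some (b,t') (t' >= t automatically) *)
Definition path_for (V : finType) (E : rel V) (r : request V)
  (ms : seq (option V)) : bool :=
  all (is_stedge E) (st_edges r.1.1 r.2 ms) && (st_end r.1.1 ms == r.1.2).

(* A (finitely supported) fractional path packing for requests Rq : 'I_k -> request:
   a list of entries (i, path, amount). *)
Definition packing (R : realType) (V : finType) (k : nat) :=
  seq ('I_k * seq (option V) * R)%type.

Definition edge_flow (R : realType) (V : finType) (k : nat)
  (Rq : 'I_k -> request V) (P : packing R V k) (e : stedge V) : R :=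
  \sum_(x <- P) x.2 * (count_mem e (st_edges (Rq x.1.1).1.1 (Rq x.1.1).2 x.1.2))%:R.

Definition feasible (R : realType) (V : finType) (E : rel V) (c : V -> V -> R)
  (B : R) (k : nat) (Rq : 'I_k -> request V) (L : seq (option V) -> bool)
  (P : packing R V k) : Prop :=
  [/\ (forall x, x \in P -> [/\ 0 <= x.2, path_for E (Rq x.1.1) x.1.2 & L x.1.2]),
      (forall i : 'I_k, \sum_(x <- P | x.1.1 == i) x.2 <= 1) &
      (forall e : stedge V, is_stedge E e -> edge_flow Rq P e <= st_cap c B e)].

Definition throughput (R : realType) (V : finType) (k : nat) (P : packing R V k) : R :=
  \sum_(x <- P) x.2.

Definition OPT_f_with (R : realType) (V : finType) (E : rel V) (c : V -> V -> R)
  (B : R) (k : nat) (Rq : 'I_k -> request V) (L : seq (option V) -> bool) : R :=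
  sup [set throughput P | P in [set P : packing R V k | feasible E c B Rq L P]].

Definition OPT_f (R : realType) (V : finType) (E : rel V) (c : V -> V -> R)
  (B : R) (k : nat) (Rq : 'I_k -> request V) : R :=
  OPT_f_with E c B Rq xpredT.

Definition OPT_f_len (R : realType) (V : finType) (E : rel V) (c : V -> V -> R)
  (B : R) (k : nat) (Rq : 'I_k -> request V) (pmax : nat) : R :=
  OPT_f_with E c B Rq (fun ms => (size ms <= pmax)%N).

(* Main.v *)
Require Import Defs.
From HB Require Import structures.
From mathcomp Require Import all_boot all_order all_algebra.
From mathcomp Require Import boolp classical_sets reals.
From mathcomp.analysis Require Import sequences exp.
From mathcomp Require Import zify ring lra.
Import Order.TTheory GRing.Theory Num.Theory.
Set Implicit Arguments. Unset Strict Implicit. Unset Printing Implicit Defensive.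

Section Comb.
Variables (V : finType) (E : rel V).

Lemma st_end_cat (u : V) ms1 ms2 :
  st_end u (ms1 ++ ms2) = st_end (st_end u ms1) ms2.
Proof. by elim: ms1 u => //= m ms IH u; rewrite IH. Qed.

Lemma st_edges_cat (u : V) t ms1 ms2 :
  st_edges u t (ms1 ++ ms2) =
  st_edges u t ms1 ++ st_edges (st_end u ms1) (t + size ms1) ms2.
Proof.
elim: ms1 u t => [|m ms IH] u t /=; first by rewrite addn0.
by rewrite IH addSnnS.
Qed.

Lemma count_time (u : V) t ms s :
  count (fun e : stedge V => e.1.2 == s) (st_edges u t ms) = (t <= s < t + size ms).
Proof.
elim: ms u t => [|m ms IH] u t /=.
  by rewrite addn0; case: leqP => //= h; rewrite ltnNge h.
rewrite IH /=; have [->|Hne] := eqVneq t s.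
  by rewrite ltnn leqnn addnS ltnS leq_addr.
rewrite add0n; case: (leqP t s) => h1; case: (leqP t.+1 s) => h2; try lia.
Qed.

Lemma all_Some (u : V) t sp :
  all (fun e : stedge V => e.2 != None) (st_edges u t (map Some sp)).
Proof. by elim: sp u t => //= v sp IH u t; rewrite IH. Qed.

Lemma all_stedge_Some (u : V) t sp :
  all (is_stedge E) (st_edges u t (map Some sp)) = path E u sp.
Proof. by elim: sp u t => //= v sp IH u t; rewrite IH. Qed.

Lemma st_end_Some (u : V) sp : st_end u (map Some sp) = last u sp.
Proof. by elim: sp u => //= v sp IH u; rewrite IH. Qed.

Lemma reach_path (u : V) t ms :
  all (is_stedge E) (st_edges u t ms) -> exists kk, kstep E kk u (st_end u ms).
Proof.
elim: ms u t => [|m ms IH] u t /=; first by move=> _; exists 0%N; exact: eqxx.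
case/andP => Huv /IH [kk Hk]; case: m Huv Hk => [v|] /= Huv Hk; last by exists kk.
by exists kk.+1 => /=; apply/existsP; exists v; rewrite Hk andbT.
Qed.

Lemma kstep_path kk (u v : V) : kstep E kk u v ->
  exists s : kk.-tuple V, path E u s && (last u s == v).
Proof.
elim: kk u => [|kk IH] u /=.
  by move=> /eqP ->; exists [tuple] => /=.
case/existsP => w /andP [Euw /IH [s Hs]].
by exists [tuple of w :: s] => /=; rewrite Euw.
Qed.

Definition spath (u v : V) : seq V :=
  odflt [::] (omap (@tval _ V)
   [pick s : (dist E u v).-tuple V | path E u s && (last u s == v)]).

Lemma dist_kstep (u v : V) : (exists kk, kstep E kk u v) -> kstep E (dist E u v) u v.
Proof.
move=> H; rewrite /dist; case: pselect => // H'.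
by case: ex_minnP.
Qed.

Lemma spath_ok (u v : V) : (exists kk, kstep E kk u v) ->
  [/\ path E u (spath u v), last u (spath u v) = v & size (spath u v) = dist E u v].
Proof.
move=> /dist_kstep /kstep_path [s0 Hs0].
rewrite /spath; case: pickP => [s /andP [Hp /eqP Hl] | /(_ s0)]; last by rewrite Hs0.
by rewrite /= size_tuple.
Qed.

Lemma dist_le_diam (u v : V) : (exists kk, kstep E kk u v) -> (dist E u v <= diam E)%N.
Proof.
move=> H; rewrite /diam.
by apply: (@leq_bigmax_cond _ (fun p : V * V => `[< exists k, kstep E k p.1 p.2 >]) (fun p => dist E p.1 p.2) (u, v)) => /=; apply/asboolP.
Qed.

End Comb.
Local Open Scope ring_scope.
Lemma sum_option (R : realType) (V : finType) (u0 : V) (f : option V -> R) :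
  \sum_(mm : option V) f mm = f None + \sum_(v : V) f (Some v).
Proof.
rewrite (bigD1 None) //=; congr (_ + _).
rewrite (reindex_onto Some (odflt u0)) /=; last by case.
by apply: eq_bigl => v; rewrite eqxx.
Qed.

Lemma ind_range (a n s : nat) :
  (a <= s < a + n)%N = (\sum_(j < n) (a + j == s))%N :> nat.
Proof.
elim: n => [|n IH]; first by rewrite big_ord0 addn0; case: leqP => //= h; rewrite ltnNge h.
rewrite big_ord_recr /= -IH.
case: (leqP a s) => h1 /=.
  2: have -> : (a + n == s) = false by apply/eqP; lia.
  2: by [].
case: (ltnP s (a + n)) => h2 /=.
  have -> : (a + n == s) = false by apply/eqP; lia.
  by have -> : (s < a + n.+1)%N by lia.
case: (eqVneq (a + n) s) => h3 /=.
  by have -> : (s < a + n.+1)%N by lia.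
by have -> : (s < a + n.+1)%N = false by lia.
Qed.

Section Main.
Variables (R : realType) (V : finType) (E : rel V) (c : V -> V -> R) (B : R)
  (k : nat) (Rq : 'I_k -> request V) (pmax : nat).

Let D := diam E.
Let W := (pmax - D).+1.

Definition newpath (r : request V) (ms : seq (option V)) (tau : nat) :=
  take tau ms ++ map Some (spath E (st_end r.1.1 (take tau ms)) r.1.2).

Definition newentries (x : 'I_k * seq (option V) * R) : packing R V k :=
  if (size x.1.2 <= pmax)%N then [:: (x.1.1, x.1.2, x.2 / 2)]
  else [seq (x.1.1, newpath (Rq x.1.1) x.1.2 tau, x.2 / (2 * W%:R)) | tau <- iota 0 W].

Definition Qof (P : packing R V k) : packing R V k := flatten (map newentries P).

Lemma sum_iota (f : nat -> R) n (Pf : pred nat) :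
  \sum_(tau <- iota 0 n | Pf tau) f tau = \sum_(tau < n | Pf tau) f tau.
Proof. by rewrite -{1}(subn0 n) -/(index_iota 0 n) big_mkord. Qed.

Lemma newentries_sum x (Pr : pred 'I_k) :
  \sum_(y <- newentries x | Pr y.1.1) y.2 = if Pr x.1.1 then x.2 / 2 else 0.
Proof.
rewrite /newentries; case: ifP => _.
  by rewrite big_cons big_nil /=; case: ifP; rewrite ?addr0.
rewrite big_map (eq_bigl (fun _ => Pr x.1.1)) //; case: (Pr x.1.1); last by rewrite big_pred0.
rewrite sum_iota sumr_const card_ord -mulr_natr.
have W0 : W%:R != 0 :> R by rewrite pnatr_eq0.
by field.
Qed.

Lemma Qof_sum P (Pr : pred 'I_k) :
  \sum_(y <- Qof P | Pr y.1.1) y.2 = (\sum_(x <- P | Pr x.1.1) x.2) / 2.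
Proof.
rewrite /Qof big_flatten big_map /= mulr_suml [RHS]big_mkcond /=.
by apply: eq_bigr => x _; rewrite newentries_sum; case: ifP; rewrite ?mul0r.
Qed.

Lemma path_kstep (u v : V) (s : seq V) : path E u s -> last u s = v -> kstep E (size s) u v.
Proof.
elim: s u => [|w s IH] u /=; first by move=> _ ->.
by case/andP => Huw Hp Hl; apply/existsP; exists w; rewrite Huw IH.
Qed.

Lemma spath_size (u v : V) : (size (spath E u v) <= D)%N.
Proof.
rewrite /spath; case: pickP => [s /andP [Hp /eqP Hl] | _] //=.
rewrite size_tuple /D; apply: dist_le_diam; exists (size s).
by apply: path_kstep.
Qed.

Lemma newpath_ok r ms tau : path_for E r ms -> (tau <= size ms)%N ->
  path_for E r (newpath r ms tau) /\ (size (newpath r ms tau) <= tau + D)%N.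
Proof.
rewrite /path_for /newpath => /andP [Ha He] Ht.
move: Ha He; rewrite -{1 2}(cat_take_drop tau ms) st_edges_cat st_end_cat all_cat.
case/andP => Ha1 Ha2 /eqP He.
have [kk Hk] := reach_path Ha2; rewrite He in Hk.
have [Hp Hl Hs] := spath_ok (ex_intro _ kk Hk).
split.
  rewrite st_edges_cat st_end_cat all_cat Ha1 /= all_stedge_Some Hp /=.
  by rewrite st_end_Some Hl.
rewrite size_cat size_take_min size_map (minn_idPl Ht) leq_add2l.
exact: spath_size.
Qed.

Lemma cnt_new r ms tau e : (tau <= size ms)%N ->
  (count_mem e (st_edges r.1.1 r.2 (newpath r ms tau)) <=
   count_mem e (st_edges r.1.1 r.2 ms) +
   ((e.2 != None) && (r.2 + tau <= e.1.2 < r.2 + tau + D)))%N.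
Proof.
move=> Ht; rewrite /newpath.
have -> : st_edges r.1.1 r.2 ms = st_edges r.1.1 r.2 (take tau ms ++ drop tau ms) by rewrite cat_take_drop.
rewrite !st_edges_cat !count_cat -addnA leq_add2l.
rewrite size_take_min (minn_idPl Ht).
set w := st_end _ _; set sp := spath _ _ _.
apply: leq_trans (leq_addl _ _).
case: (eqVneq e.2 None) => He /=.
  rewrite leqn0; apply/eqP/count_memPn.
  apply/negP => Hin; move/allP: (all_Some w (r.2 + tau) sp) => /(_ e Hin).
  by rewrite He.
apply: leq_trans (sub_count (a2 := fun e' : stedge V => e'.1.2 == e.1.2) _ _) _.
  by move=> e' /eqP ->.
rewrite count_time size_map.
case: (leqP (r.2 + tau) e.1.2) => //= _.
have := spath_size w r.1.2; rewrite -/sp => Hsp.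
case: ltnP => //= h; rewrite (leq_trans h) //.
by rewrite leq_add2l.
Qed.

Lemma tau_sum t s n m : (n <= m)%N ->
  (\sum_(tau < n) (t + tau <= s < t + tau + D) <=
   \sum_(j < D) ((j <= s) && (t <= s - j < t + m)))%N.
Proof.
move=> Hnm.
rewrite (eq_bigr (fun tau : 'I_n => \sum_(j < D) (t + tau + j == s))%N); last first.
  by move=> tau _; rewrite ind_range.
rewrite exchange_big /=; apply: leq_sum => j _.
under eq_bigr => tau _ do rewrite addnAC.
rewrite -ind_range.
case: (leqP (t + j) s) => h1 //=; case: ltnP => h2 //=.
have -> : (j <= s)%N by lia.
have -> : (t <= s - j)%N by lia.
by have -> : (s - j < t + m)%N by lia.
Qed.

Definition cntx (x : 'I_k * seq (option V) * R) (e : stedge V) :=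
  count_mem e (st_edges (Rq x.1.1).1.1 (Rq x.1.1).2 x.1.2).

Definition Hx (x : 'I_k * seq (option V) * R) (s : nat) : nat :=
  \sum_(j < D) [&& (pmax < size x.1.2)%N, (j <= s)%N &
                  ((Rq x.1.1).2 <= s - j < (Rq x.1.1).2 + size x.1.2)%N].

Lemma newentries_flow x e : path_for E (Rq x.1.1) x.1.2 -> 0 <= x.2 ->
  \sum_(y <- newentries x) y.2 * (cntx y e)%:R <=
  x.2 / 2 * (cntx x e)%:R + x.2 / (2 * W%:R) * ((e.2 != None) * Hx x e.1.2)%N%:R.
Proof.
move=> Hp Hx0; rewrite /newentries; case: ifP => Hs.
  rewrite big_cons big_nil addr0 /= lerDl; apply: mulr_ge0 => //.
  by rewrite divr_ge0 // mulr_ge0 // ler0n.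
move/negbT: Hs; rewrite -ltnNge => Hs.
have HW : (W <= size x.1.2)%N by apply: leq_ltn_trans (leq_subr D pmax) Hs.
rewrite big_map sum_iota.
set r := Rq x.1.1; set t := r.2; set s := e.1.2; set b := (e.2 != None).
have Hg : (\sum_(tau < W) (b && (t + tau <= s < t + tau + D)) <= b * Hx x s)%N.
  case: b; last by rewrite mul0n big1.
  rewrite mul1n; apply: leq_trans (tau_sum t s HW) _.
  by apply: leq_sum => j _; rewrite Hs.
apply: le_trans (_ : _ <= \sum_(tau < W) x.2 / (2 * W%:R) *
                 (cntx x e + (b && (t + tau <= s < t + tau + D)))%N%:R) _.
  apply: ler_sum => tau _ /=; apply: ler_wpM2l.
    by rewrite divr_ge0 // mulr_ge0 // ler0n.
  rewrite ler_nat /cntx /=.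
  by apply: cnt_new; apply: leq_trans HW; apply: ltnW.
rewrite -mulr_sumr -natr_sum big_split /= sum_nat_const card_ord.
apply: le_trans (_ : _ <= x.2 / (2 * W%:R) * (W * cntx x e + b * Hx x s)%N%:R) _.
  apply: ler_wpM2l; first by rewrite divr_ge0 // mulr_ge0 // ler0n.
  by rewrite ler_nat leq_add2l.
have W0 : W%:R != 0 :> R by rewrite pnatr_eq0.
rewrite natrD natrM; rewrite le_eqVlt; apply/orP; left; apply/eqP.
by field.
Qed.

Lemma slot_cnt (L : seq (stedge V)) s :
  (\sum_(wm : V * option V) count_mem (wm.1, s, wm.2) L)%N = count (fun e : stedge V => e.1.2 == s) L.
Proof.
elim: L => [|e L IH] /=; first by rewrite big1.
rewrite big_split /= IH; congr (_ + _)%N.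
case: e => [[a t] m] /=.
case: (eqVneq t s) => [->|Hts] /=.
  rewrite (bigD1 (a, m)) //= eqxx big1 ?addn0 // => [[w mm]] /= Hne.
  apply/eqP; rewrite eqb0; apply/negP => /eqP [] Ha Hm; move: Hne.
  by rewrite Ha Hm eqxx.
rewrite big1 // => [[w mm]] _ /=; apply/eqP; rewrite eqb0; apply/negP => /eqP [] _ Ht _.
by move: Hts; rewrite Ht eqxx.
Qed.

Definition Cst := \sum_(p : V * V | E p.1 p.2) c p.1 p.2 + #|V|%:R * B.

Lemma slot_cap (u0 : V) s :
  \sum_(wm : V * option V) (if is_stedge E (wm.1, s, wm.2) then st_cap c B (wm.1, s, wm.2) else 0)
  = Cst.
Proof.
rewrite /Cst -(pair_bigA _ (fun w mm => if is_stedge E (w, s, mm) then st_cap c B (w, s, mm) else 0)) /=.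
rewrite [in RHS]big_mkcond /= -(pair_bigA _ (fun w v => if E w v then c w v else 0)) /=.
rewrite (eq_bigr (fun w => B + \sum_v (if E w v then c w v else 0))); last by move=> w _; rewrite (sum_option u0).
by rewrite big_split /= sumr_const addrC mulr_natl.
Qed.

Lemma alive (Lp : seq (option V) -> bool) (P : packing R V k) (u0 : V) s :
  feasible E c B Rq Lp P ->
  \sum_(x <- P) x.2 * ((Rq x.1.1).2 <= s < (Rq x.1.1).2 + size x.1.2)%N%:R <= Cst.
Proof.
case=> Hx _ Hf.
rewrite -(slot_cap u0 s).
have -> : \sum_(x <- P) x.2 * ((Rq x.1.1).2 <= s < (Rq x.1.1).2 + size x.1.2)%N%:R =
   \sum_(wm : V * option V) edge_flow Rq P (wm.1, s, wm.2).
  rewrite /edge_flow exchange_big /=; apply: eq_bigr => x _.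
  by rewrite -(count_time (Rq x.1.1).1.1) -slot_cnt natr_sum mulr_sumr.
apply: ler_sum => wm _; case: ifP => Hst; first exact: Hf.
rewrite /edge_flow big1_seq // => x /andP [_ Hin].
have [_ /andP [Hall _] _] := Hx x Hin.
rewrite (_ : count_mem _ _ = 0%N) ?mulr0 //; apply/count_memPn/negP => Hin2.
by move/allP: Hall => /(_ _ Hin2); rewrite Hst.
Qed.

Lemma Hx_sum (Lp : seq (option V) -> bool) (P : packing R V k) (u0 : V) s :
  feasible E c B Rq Lp P ->
  \sum_(x <- P) x.2 * (Hx x s)%:R <= D%:R * Cst.
Proof.
move=> Hf; have [Hx0 _ _] := Hf.
rewrite /Hx.
under eq_bigr => x _ do rewrite natr_sum mulr_sumr.
rewrite exchange_big /=.
apply: le_trans (_ : _ <= \sum_(j < D) Cst) _; last first.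
  by rewrite sumr_const card_ord mulr_natl.
apply: ler_sum => j _.
apply: le_trans (alive u0 (s - j) Hf).
rewrite big_seq [X in _ <= X]big_seq; apply: ler_sum => x Hin.
have [H0 _ _] := Hx0 x Hin.
apply: ler_wpM2l => //; rewrite ler_nat.
by case: (pmax < size x.1.2)%N; case: (j <= s)%N.
Qed.

Lemma Q_flow (Lp : seq (option V) -> bool) (P : packing R V k) (u0 : V) (cmin : R) e :
  feasible E c B Rq Lp P -> 0 <= B -> (forall u v, E u v -> cmin <= c u v) ->
  D%:R * Cst <= W%:R * cmin -> is_stedge E e ->
  edge_flow Rq (Qof P) e <= st_cap c B e.
Proof.
move=> Hf HB Hc HDC He; have [Hx0 _ Hfl] := Hf.
have W0 : 0 < W%:R :> R by rewrite ltr0n.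
rewrite /edge_flow /Qof big_flatten big_map /=.
apply: le_trans (_ : _ <= \sum_(x <- P) (x.2 / 2 * (cntx x e)%:R +
        x.2 / (2 * W%:R) * ((e.2 != None) * Hx x e.1.2)%N%:R)) _.
  rewrite big_seq [X in _ <= X]big_seq; apply: ler_sum => x Hin.
  have [H0 Hp _] := Hx0 x Hin.
  exact: newentries_flow.
rewrite big_split /=.
have -> : \sum_(x <- P) x.2 / 2 * (cntx x e)%:R = 2^-1 * \sum_(x <- P) x.2 * (cntx x e)%:R.
  by rewrite mulr_sumr; apply: eq_bigr => x _; rewrite mulrCA mulrA.
have -> : \sum_(x <- P) x.2 / (2 * W%:R) * ((e.2 != None) * Hx x e.1.2)%N%:R =
   (e.2 != None)%:R / (2 * W%:R) * \sum_(x <- P) x.2 * (Hx x e.1.2)%:R.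
  rewrite mulr_sumr; apply: eq_bigr => x _; rewrite natrM; field.
  by rewrite lt0r_neq0.
have Hfe := Hfl e He; rewrite /edge_flow in Hfe.
have HS := Hx_sum u0 e.1.2 Hf.
move: He Hfe HS; rewrite /cntx; case: e => [[u s] [v|]] /= He Hfe HS; last first.
  rewrite mul0r mul0r addr0; rewrite /st_cap /= in Hfe *; lra.
rewrite mul1r.
have Hcv := Hc u v He.
have H2 : (2 * W%:R)^-1 * \sum_(x <- P) x.2 * (Hx x s)%:R <= cmin / 2.
  have HW2 : 0 < 2 * W%:R :> R by rewrite mulr_gt0.
  rewrite -(ler_pM2l HW2) mulrA mulfV ?lt0r_neq0 // mul1r.
  apply: le_trans HS _; apply: le_trans HDC _; rewrite le_eqVlt; apply/orP; left; apply/eqP.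
  have := lt0r_neq0 W0; move=> HW; by field.
rewrite /st_cap /= in Hfe *; lra.
Qed.

Lemma Q_feasible (P : packing R V k) (u0 : V) (cmin : R) :
  feasible E c B Rq xpredT P -> 0 <= B -> (forall u v, E u v -> cmin <= c u v) ->
  D%:R * Cst <= W%:R * cmin -> (D <= pmax)%N ->
  feasible E c B Rq (fun ms => (size ms <= pmax)%N) (Qof P).
Proof.
move=> Hf HB Hc HDC HDp; have [Hx0 Hreq _] := Hf.
split.
- move=> y /flatten_mapP [x Hin]; have [H0 Hp _] := Hx0 x Hin.
  rewrite /newentries; case: ifP => Hs.
    by rewrite inE => /eqP -> /=; split => //; rewrite divr_ge0.
  move/negbT: Hs; rewrite -ltnNge => Hs.
  case/mapP => tau; rewrite mem_iota add0n => Htau -> /=.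
  have Ht : (tau <= size x.1.2)%N.
    by apply: leq_trans (ltnW Htau) _; apply: leq_ltn_trans (leq_subr D pmax) Hs.
  have [Hp2 Hsz] := newpath_ok Hp Ht.
  split => //; first by rewrite divr_ge0 // mulr_ge0 // ler0n.
  apply: leq_trans Hsz _; rewrite /W in Htau; lia.
- move=> i; have := Qof_sum P (fun j => j == i) => /= ->.
  have := Hreq i; lra.
- move=> e He; exact: (Q_flow u0 Hf HB Hc HDC He).
Qed.

Lemma thr_Q (P : packing R V k) : throughput (Qof P) = throughput P / 2.
Proof. exact: (Qof_sum P xpredT). Qed.

Lemma thr_le (Lp : seq (option V) -> bool) (P : packing R V k) :
  feasible E c B Rq Lp P -> throughput P <= k%:R.
Proof.
case=> _ Hreq _; rewrite /throughput.
have -> : \sum_(x <- P) x.2 = \sum_(i < k) \sum_(x <- P | x.1.1 == i) x.2.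
  under [RHS]eq_bigr => i _ do rewrite big_mkcond.
  rewrite [RHS]exchange_big /=; apply: eq_bigr => x _.
  rewrite (bigD1 x.1.1) //= eqxx big1 ?addr0 // => i Hi.
  by rewrite eq_sym (negbTE Hi).
apply: le_trans (_ : _ <= \sum_(i < k) (1 : R)) _; first by apply: ler_sum.
by rewrite sumr_const card_ord.
Qed.

End Main.

Theorem lemma3p2 (R : realType) (V : finType) (E : rel V) (c : V -> V -> R)
  (B : R) (k : nat) (Rq : 'I_k -> request V) (cmin : R) (pmax : nat) :
  (forall u v, E u v -> 0 < c u v) ->
  0 <= B ->
  (forall u v, E u v -> cmin <= c u v) ->
  (exists u v, E u v /\ c u v = cmin) ->
  let alpha := cmin / (2 * (\sum_(p : V * V | E p.1 p.2) c p.1 p.2 + #|V|%:R * B)) in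
  let nu := alpha^-1 in
  (nu + 2) * (diam E)%:R <= pmax%:R ->
  2^-1 * (1 - (expR 1)^-1) * OPT_f E c B Rq <= OPT_f_len E c B Rq pmax.
Proof.
Local Open Scope classical_set_scope.
move=> Hcpos HB Hc [u0 [v0 [E0 Hc0]]] alpha nu Hnu.
have Hcm : 0 < cmin by rewrite -Hc0; apply: Hcpos.
have HS : 0 < Cst E c B by
  rewrite /Cst; apply: ltr_wpDr; [by rewrite mulr_ge0 // ler0n|];
  rewrite (bigD1 (u0, v0)) //=; apply: ltr_wpDr; [apply: sumr_ge0 => p /andP [Ep _]; exact: ltW (Hcpos _ _ Ep)| exact: Hcpos].
set S := Cst E c B in HS.
have Hnu' : nu = 2 * S / cmin by rewrite /nu /alpha invf_div.
set d := (diam E)%:R in Hnu; set p := pmax%:R in Hnu.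
have Hd0 : 0 <= d by rewrite ler0n.
have Hn0 : 0 <= nu by rewrite Hnu'; apply: divr_ge0; [apply: mulr_ge0; [by []| exact: ltW] | exact: ltW].
have HDp : (diam E <= pmax)%N.
  rewrite -(ler_nat R) -/d -/p; apply: le_trans Hnu; nra.
have h1 : (2 * S + 2 * cmin) * d <= p * cmin.
  have := ler_wpM2r (ltW Hcm) Hnu.
  have -> : (nu + 2) * d * cmin = (2 * S + 2 * cmin) * d.
    by rewrite Hnu'; field; rewrite lt0r_neq0.
  by [].
have HDC : (diam E)%:R * S <= ((pmax - diam E).+1)%:R * cmin.
  rewrite -addn1 natrD natrB // -/d -/p; nra.
have feas0 : forall Lp, feasible E c B Rq Lp ([::] : packing R V k).
  move=> Lp; split => //.
  - by move=> i; rewrite big_nil ler01.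
  - move=> [[w s] m] He; rewrite /edge_flow big_nil /st_cap; case: m He => [v|] //= He.
    exact: ltW (Hcpos _ _ He).
have supP : forall Lp, has_sup [set throughput P | P in [set P : packing R V k | feasible E c B Rq Lp P]].
  move=> Lp; split; first by exists 0; exists [::]; [exact: feas0 | by rewrite /throughput big_nil].
  by exists k%:R => y [P HP <-]; exact: thr_le HP.
have H2 : OPT_f E c B Rq <= 2 * OPT_f_len E c B Rq pmax.
  apply: ge_sup; first by exists 0; exists [::]; [exact: feas0 | by rewrite /throughput big_nil].
  move=> y [P HP <-].
  have HQ := Q_feasible u0 HP HB Hc HDC HDp.
  have := sup_upper_bound (supP (fun ms => (size ms <= pmax)%N)) (ex_intro2 _ _ _ HQ erefl).
  rewrite thr_Q -/(OPT_f_with E c B Rq _) -/(OPT_f_len E c B Rq pmax) => Hle.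
  lra.
have H0 : 0 <= OPT_f E c B Rq.
  apply: (sup_upper_bound (supP xpredT)); exists [::]; [exact: feas0 | by rewrite /throughput big_nil].
have Hq : 0 <= (expR 1 : R)^-1 by rewrite invr_ge0 ltW // expR_gt0.
nra.
Qed.
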